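(* Let $\alpha,\beta,\gamma\in\mathrm{ord}$. If $\alpha<\gamma$ and $\beta<\gamma$, then $\sup(\alpha,\beta)<\gamma$.
   Context: Work constructively. Let $\mathfrak F$ be a set of index sets containing $\mathbb N$ and each $\mathbb N_k=\{n\in\mathbb N:n<k\}$ ($k\ge0$), closed (up to isomorphism) under finitely enumerated subsets, sets of finitely enumerated subsets, and disjoint unions indexed by elements of $\mathfrak F$. A finitely enumerated subset of $A$ is one given by a map $\mathbb N_k\to A$; write $F\subseteq_f I$. The set $\mathrm{ord}$ is inductively generated by $\underline 0$ and, for every family $(\alpha_i)_{i\in I}$ with $I\in\mathfrak F$, $\alpha_i\in\mathrm{ord}$, an element $\mathrm S(\alpha_i)_{i\in I}$; elements of the second kind form $\mathrm{ord}^*$; for such $\alpha$, $I_\alpha=I$ and $\alpha_i$ are its definitional subordinals; $I_{\underline 0}=\emptyset$. For a finite list $F$ in $I_\alpha$, $\alpha_F$ is the list of the $\alpha_i$, $i\in F$. Supremum: for a family $(\alpha^j)_{j\in J}$ in $\mathrm{ord}^*$, $J\in\mathfrak F$, $\sup(\alpha^j)_{j\in J}=\mathrm S(\varepsilon_k)_{k\in K}$ with $K$ the disjoint union of the $I_{\alpha^j}$ (injections $\iota_j$) and $\varepsilon_{\iota_j(i)}=(\alpha^j)_i$; for a finite family in $\mathrm{ord}$, $\sup(\alpha^1,\dots,\alpha^r)$ is $\underline0$ if all are $\underline0$, else the sup of those in $\mathrm{ord}^*$. Relations between an element and a nonempty finite list, by simultaneous induction: $\alpha\le\beta^1,\dots,\beta^m$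 means $\alpha_i<\beta^1,\dots,\beta^m$ for all $i\in I_\alpha$; $\alpha<\beta^1,\dots,\beta^m$ means there exist $F_1\subseteq_f I_{\beta^1},\dots,F_m\subseteq_f I_{\beta^m}$, not all empty, with $\alpha\le\beta^1_{F_1},\dots,\beta^m_{F_m}$ (concatenated list); $\alpha<\gamma$ is the case $m=1$. *)

(* Defs.v *)
From mathcomp Require Import all_boot.
Set Implicit Arguments. Unset Strict Implicit. Unset Printing Implicit Defensive.

Record iso (A B : Type) := Iso {
  iso_to : A -> B; iso_from : B -> A;
  iso_toK : forall a, iso_from (iso_to a) = a;
  iso_fromK : forall b, iso_to (iso_from b) = b }.

(* A finitely enumerated subset of A: a map N_k -> A (here 'I_k = N_k). *)
Definition fsub (A : Type) : Type := {k : nat & 'I_k -> A}.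

(* The set of index sets F: codes Idx decoded by El, containing N and every
   N_k, and closed (up to isomorphism) under finitely enumerated subsets,
   sets of finitely enumerated subsets and disjoint unions indexed by
   elements of F. *)
Record IndexSets := {
  Idx :> Type;
  El : Idx -> Type;
  cNat : Idx;
  isoNat : iso (El cNat) nat;
  cN : nat -> Idx;
  isoN : forall k, iso (El (cN k)) 'I_k;
  cSub : forall (I : Idx), fsub (El I) -> Idx;
  isoSub : forall (I : Idx) (F : fsub (El I)),
    iso (El (cSub F)) {j : 'I_(projT1 F) & {i : El I | i = projT2 F j}};
  cFin : Idx -> Idx;
  isoFin : forall I, iso (El (cFin I)) (fsub (El I));
  cSig : forall (J : Idx), (El J -> Idx) -> Idx;
  isoSig : forall (J : Idx) (F : El J -> Idx),
    iso (El (cSig F)) {j : El J & El (F j)} }.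

Arguments El {_} _.
Arguments cSig {_} _ _.
Arguments isoSig {_} _ _.
Arguments cN _ _ : clear implicits.
Arguments isoN _ _ : clear implicits.

Section Ord.
Variable U : IndexSets.

Inductive ord : Type :=
  | OZero : ord
  | OS : forall (I : Idx U), (El I -> ord) -> ord.
Arguments OS : clear implicits.

Definition ix (a : ord) : Type :=
  match a with OZero => Empty_set | OS K _ => El K end.

Definition sub (a : ord) : ix a -> ord :=
  match a as a0 return ix a0 -> ord with
  | OZero => fun e => match e with end
  | OS _ f => f
  end.

Definition subF (a : ord) (F : fsub (ix a)) : seq ord :=
  map (fun j => sub (projT2 F j)) (enum 'I_(projT1 F)).

Inductive choice : seq ord -> Type :=
  | cnil : choice [::]
  | ccons : forall (b : ord) (L : seq ord), fsub (ix b) -> choice L -> choice (b :: L).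

Fixpoint flat (L : seq ord) (c : choice L) : seq ord :=
  match c with
  | cnil => [::]
  | ccons b L F c' => subF F ++ flat c'
  end.

Fixpoint nonempty_choice (L : seq ord) (c : choice L) : Prop :=
  match c with
  | cnil => False
  | ccons b L F c' => 0 < projT1 F \/ nonempty_choice c'
  end.

(* alpha <= beta^1..beta^m  iff  alpha_i < beta^1..beta^m for all i in I_alpha,
   where  gamma < L  iff  exists F_j not all empty with gamma <= concatenation. *)
Fixpoint ord_le (a : ord) (L : seq ord) : Prop :=
  match a with
  | OZero => True
  | OS K f => forall i : El K,
      exists c : choice L, nonempty_choice c /\ ord_le (f i) (flat c)
  end.

Definition ord_lt_list (a : ord) (L : seq ord) : Prop :=
  exists c : choice L, nonempty_choice c /\ ord_le a (flat c).

Definition ord_lt (a g : ord) : Prop := ord_lt_list a [:: g].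

Definition ostar : Type := {I : Idx U & El I -> ord}.

Definition sup_star (J : Idx U) (A : El J -> ostar) : ord :=
  OS (cSig J (fun j => projT1 (A j)))
      (fun k => let p := iso_to (isoSig J (fun j => projT1 (A j))) k in
                projT2 (A (projT1 p)) (projT2 p)).

Definition star_of (a : ord) : option ostar :=
  match a with OZero => None | OS K f => Some (existT _ K f) end.

(* sup of a finite family alpha^1..alpha^r in ord: 0 if all are 0, else the
   sup of those in ord*, indexed by N_r' (r' = number of those). *)
Definition sup_list (s : seq ord) : ord :=
  let t := pmap star_of s in
  match t with
  | [::] => OZero
  | _ :: _ => sup_star (fun x : El (cN U (size t)) =>
                 tnth (in_tuple t) (iso_to (isoN U (size t)) x))
  end.

Definition sup2 (a b : ord) : ord := sup_list [:: a; b].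

End Ord.

(* Main.v *)
Require Import Defs.
From mathcomp Require Import all_boot.
From Stdlib Require List.
Set Implicit Arguments. Unset Strict Implicit.

Section P.
Variable U : IndexSets.
Local Notation ord := (ord U).

Definition fsub0 (A : Type) : fsub A.
Proof. exists 0; by case. Defined.

Fixpoint echoice (L : seq ord) : choice L :=
  match L with
  | [::] => cnil U
  | b :: L' => ccons (fsub0 (ix b)) (echoice L')
  end.

Lemma subF0 (b : ord) : subF (fsub0 (ix b)) = [::].
Proof. by rewrite /subF /= enum_ord0. Qed.

Lemma flat_e (L : seq ord) : flat (echoice L) = [::].
Proof. by elim: L => //= b L ->; rewrite subF0. Qed.

Fixpoint cat_choice (L M : seq ord) (c : choice L) (d : choice M) : choice (L ++ M) :=
  match c in choice L0 return choice (L0 ++ M) with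
  | cnil => d
  | ccons b L F c' => ccons F (cat_choice c' d)
  end.

Lemma flat_cat (L M : seq ord) (c : choice L) (d : choice M) :
  flat (cat_choice c d) = flat c ++ flat d.
Proof. by elim: c => //= b L0 F c' ->; rewrite catA. Qed.

Lemma ne_cat (L M : seq ord) (c : choice L) (d : choice M) :
  nonempty_choice (cat_choice c d) <-> nonempty_choice c \/ nonempty_choice d.
Proof. elim: c => /= [|b L0 F c' IH]; first by intuition. move: IH; tauto. Qed.

Lemma ne_e (L : seq ord) : ~ nonempty_choice (echoice L).
Proof. by elim: L => //= b L IH [|]. Qed.

Lemma lt_catl (x : ord) (L M : seq ord) : ord_lt_list x L -> ord_lt_list x (L ++ M).
Proof.
case=> c [hn hl]; exists (cat_choice c (echoice M)); split.
  by apply/ne_cat; left.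
by rewrite flat_cat flat_e cats0.
Qed.

Lemma lt_catr (x : ord) (L M : seq ord) : ord_lt_list x M -> ord_lt_list x (L ++ M).
Proof.
case=> c [hn hl]; exists (cat_choice (echoice L) c); split.
  by apply/ne_cat; right.
by rewrite flat_cat flat_e.
Qed.

Lemma choice_cons_gen (L : seq ord) (c : choice L) :
  match L as L0 return choice L0 -> Type with
  | [::] => fun c => flat c = [::] /\ ~ nonempty_choice c
  | b :: L' => fun c => {F : fsub (ix b) & {c' : choice L' |
       flat c = subF F ++ flat c' /\
       (nonempty_choice c <-> 0 < projT1 F \/ nonempty_choice c')}}
  end c.
Proof.
case: c => [|b L0 F c']; first by split.
by exists F, c'.
Qed.

Lemma lt1 (x g : ord) : ord_lt x g <->
  exists F : fsub (ix g), 0 < projT1 F /\ ord_le x (subF F).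
Proof.
split.
  case=> c [hn hl].
  have [F [c' [hf hne]]] := choice_cons_gen c.
  have [h1 h2] := choice_cons_gen c'.
  exists F; split.
    by case: (proj1 hne hn).
  by rewrite hf h1 cats0 in hl.
case=> F [hF hl]; exists (ccons F (cnil U)); split; first by left.
by rewrite /= cats0.
Qed.

Definition fcat A (F G : fsub A) : fsub A :=
  existT _ (projT1 F + projT1 G)
    (fun i => match split i with inl j => projT2 F j | inr j => projT2 G j end).

Lemma enumD m n : enum 'I_(m + n) =
  map (lshift n) (enum 'I_m) ++ map (@rshift m n) (enum 'I_n).
Proof.
apply: (inj_map val_inj); rewrite map_cat val_enum_ord iotaD add0n.
congr (_ ++ _).
  by rewrite -map_comp (eq_map (g := val)) // val_enum_ord.
rewrite -map_comp (eq_map (g := addn m \o val)) // map_comp val_enum_ord.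
by rewrite -(iotaDl m 0 n) addn0.
Qed.

Lemma subF_cat (b : ord) (F G : fsub (ix b)) :
  subF (fcat F G) = subF F ++ subF G.
Proof.
case: F G => m f [n h]; rewrite /subF /fcat /= enumD map_cat -!map_comp.
congr (_ ++ _); apply: eq_map => j /=.
  by rewrite (unsplitK (inl _ j)).
by rewrite (unsplitK (inr _ j)).
Qed.

Lemma In_nth T (x0 : T) (t : seq T) i : i < size t -> Stdlib.Lists.List.In (nth x0 t i) t.
Proof.
elim: t i => //= y t IH [|i] /= h; first by left.
by right; apply: IH.
Qed.

Lemma sup_list_le (s : seq ord) (L : seq ord) :
  (forall y, Stdlib.Lists.List.In y s -> forall i : ix y, ord_lt_list (@sub U y i) L) ->
  ord_le (sup_list s) L.
Proof.
move=> H.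
have H' : forall z, Stdlib.Lists.List.In z (pmap (@star_of U) s) ->
    forall i, ord_lt_list (projT2 z i) L.
  elim: s H => //= y s IH H z.
  case: y H => [|K f] H /=.
    by apply: IH => y hy; apply: H; right.
  case=> [<- i|hz]; first exact: (H (OS f) (or_introl erefl) i).
  by apply: IH => // y hy; apply: H; right.
rewrite /sup_list; move: H'; case: (pmap (@star_of U) s) => [|z t] H' //=.
move=> k; apply: H'.
rewrite (tnth_nth z); apply: In_nth.
exact: ltn_ord.
Qed.

Lemma le_sub (x : ord) (L : seq ord) : ord_le x L -> forall i : ix x, ord_lt_list (@sub U x i) L.
Proof. by case: x => //= K f h i; apply: h. Qed.

End P.

Theorem lemma4p4 (U : IndexSets) (a b g : ord U) :
  ord_lt a g -> ord_lt b g -> ord_lt (sup2 a b) g.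
Proof.
move=> /lt1 [Fa [ha la]] /lt1 [Fb [hb lb]].
apply/lt1; exists (fcat Fa Fb); split.
  by rewrite /= addn_gt0 ha.
apply: sup_list_le => y; rewrite subF_cat /=.
case=> [<-|[<-|[]]] i.
  by apply: lt_catl; apply: le_sub.
by apply: lt_catr; apply: le_sub.
Qed.
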